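(* Let $N=\{1,\dots,n\}$, let $U$ be a finite set, $S_1,\dots,S_n\subseteq U$, $w:U\to\mathbb{R}$, $c\in\mathbb{R}$, and let $s:2^N\to\mathbb{R}$ be defined by $s_A=c+\mathbf{w}(\bigcup_{i\in A}S_i)$, where $\mathbf{w}(S)=\sum_{u\in S}w(u)$. Define the type-4 discrete set Fourier transform of $s$ by $\widehat{s}^{(4)}_B=\sum_{A\subseteq N,\,A\cup B=N}(-1)^{|A\cap B|}s_A$ for $B\subseteq N$. Then $$\widehat{s}^{(4)}_B=\begin{cases}-\mathbf{w}\Big(\bigcap_{i\in B}S_i\setminus\bigcup_{i\notin B}S_i\Big), & B\neq\emptyset,\\ s_N, & B=\emptyset.\end{cases}$$ *)

(* Defs.v *)
From mathcomp Require Import all_boot all_order all_algebra.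
Set Implicit Arguments. Unset Strict Implicit. Unset Printing Implicit Defensive.
Import Order.TTheory GRing.Theory Num.Theory.
Local Open Scope ring_scope.

Definition wsum (R : numDomainType) (U : finType) (w : U -> R) (S : {set U}) : R :=
  \sum_(u in S) w u.

Definition sfun (R : numDomainType) (U : finType) (n : nat)
  (S : 'I_n -> {set U}) (w : U -> R) (c : R) (A : {set 'I_n}) : R :=
  c + wsum w (\bigcup_(i in A) S i).

Definition fourier4 (R : numDomainType) (n : nat) (s : {set 'I_n} -> R)
  (B : {set 'I_n}) : R :=
  \sum_(A : {set 'I_n} | A :|: B == [set: 'I_n]) (-1) ^+ #|A :&: B| * s A.

(* Main.v *)
Require Import Defs.
From mathcomp Require Import all_boot all_order all_algebra.
From mathcomp Require Import lra.
Import Order.TTheory GRing.Theory Num.Theory.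
Set Implicit Arguments.
Local Open Scope ring_scope.

Definition tog (n : nat) (x : 'I_n) (A : {set 'I_n}) :=
  if x \in A then A :\ x else x |: A.

Lemma togK n (x : 'I_n) : involutive (tog x).
Proof.
move=> A; rewrite {2}/tog; case: ifP => hx; rewrite /tog.
  by rewrite !inE eqxx /= setD1K.
by rewrite !inE eqxx /= setU1K // hx.
Qed.

Lemma tog_in n (x : 'I_n) A i : (i \in tog x A) = (if i == x then x \notin A else i \in A).
Proof.
rewrite /tog; case: ifP => hx; rewrite !inE; case: eqP => // ->; by rewrite hx.
Qed.

Lemma toggle0 (R : numDomainType) n (B : {set 'I_n}) x (g : {set 'I_n} -> R) :
  x \in B -> (forall A, g (tog x A) = g A) ->
  \sum_(A : {set 'I_n} | A :|: B == [set: 'I_n]) (-1) ^+ #|A :&: B| * g A = 0.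
Proof.
move=> xB hg.
set S := (X in X = 0).
have : S = - S.
  rewrite {1}/S (reindex_inj (can_inj (togK x))) /= -sumrN.
  apply: eq_big => A.
    have -> : (tog x A :|: B) = (A :|: B).
      by apply/setP => i; rewrite !inE tog_in; case: eqP => // ->; rewrite xB !orbT.
    by [].
  move=> _; rewrite hg -mulNr; congr (_ * _).
  rewrite (cardsD1 x (tog x A :&: B)) (cardsD1 x (A :&: B)).
  have -> : (tog x A :&: B) :\ x = (A :&: B) :\ x.
    by apply/setP => i; rewrite !inE tog_in; case: eqP.
  rewrite !inE tog_in eqxx xB !andbT.
  by case: (x \in A); rewrite /= ?add0n ?add1n exprS ?mulN1r ?opprK.
move=> h; have : S *+ 2 = 0 by rewrite mulr2n {1}h addNr.
by move/eqP; rewrite mulrn_eq0 /= => /eqP.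
Qed.

Lemma wsumE (R : numDomainType) (U : finType) (w : U -> R) X :
  wsum w X = \sum_u (u \in X)%:R * w u.
Proof.
rewrite /wsum big_mkcond; apply: eq_bigr => u _; by case: (u \in X); rewrite ?mul1r ?mul0r.
Qed.

Lemma main (R : numDomainType) (U : finType) (n : nat)
  (S : 'I_n -> {set U}) (w : U -> R) (c : R) (B : {set 'I_n}) :
  fourier4 (sfun S w c) B =
    (if B != set0 then
       - wsum w ((\bigcap_(i in B) S i) :\: (\bigcup_(i in ~: B) S i))
     else sfun S w c [set: 'I_n]).
Proof.
rewrite /fourier4 /sfun.
case: (boolP (B != set0)) => hB; last first.
  move/negPn/eqP: hB => ->.
  rewrite (big_pred1 [set: 'I_n]); last by move=> A; rewrite /= setU0.
  by rewrite setI0 cards0 expr0 mul1r.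
case/set0Pn: hB => x xB.

rewrite (eq_bigr _ (fun A _ => mulrDr _ _ _)).
rewrite big_split /= (@toggle0 R n B x (fun _ => c) xB) //.
rewrite add0r.
under eq_bigr do rewrite wsumE big_distrr /=.
rewrite exchange_big wsumE -sumrN; apply: eq_bigr => u _.
under eq_bigr do rewrite mulrA.
rewrite -big_distrl -mulNr /=; congr (_ * _).
case: (boolP [exists y in B, u \notin S y]).
  case/existsP => y /andP [yB uy].
  have -> : u \in (\bigcap_(i in B) S i) :\: (\bigcup_(i in ~: B) S i) = false.
    apply/negbTE; rewrite inE negb_and; apply/orP; right.
    by apply/bigcapP => /(_ y yB); apply/negP.
  rewrite oppr0 (@toggle0 R n B y (fun A => (u \in \bigcup_(i in A) S i)%:R) yB) //.
  move=> A; suff -> : (u \in \bigcup_(i in tog y A) S i) = (u \in \bigcup_(i in A) S i) by [].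
  apply/idP/idP => /bigcupP [i hi ui]; apply/bigcupP; exists i => //; move: hi;
  rewrite tog_in; case: eqP ui => // ->; by rewrite (negbTE uy).
rewrite negb_exists => /forallP hall.
case: (boolP [exists z in ~: B, u \in S z]).
  case/existsP => z /andP [zB uz].
  have -> : u \in (\bigcap_(i in B) S i) :\: (\bigcup_(i in ~: B) S i) = false.
    by apply/negbTE; rewrite inE negb_and negbK; apply/orP; left; apply/bigcupP; exists z.
  rewrite oppr0 -[RHS](@toggle0 R n B x (fun _ => (1 : R)) xB); last by [].
  apply: eq_bigr => A /eqP hA; congr (_ * _).
  have -> : u \in \bigcup_(i in A) S i by apply/bigcupP; exists z => //;
    move/setP: hA => /(_ z); rewrite !inE; move: zB; rewrite inE => /negbTE ->; rewrite orbF.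
  by [].
rewrite negb_exists => /forallP hall2.
have -> : u \in (\bigcap_(i in B) S i) :\: (\bigcup_(i in ~: B) S i) = true.
  rewrite !inE; apply/andP; split.
    apply/bigcupP => -[i hi ui]; by move: (hall2 i); rewrite hi ui.
  by apply/bigcapP => i hi; move: (hall i); rewrite hi /= negbK.
have key : forall A : {set 'I_n}, A :|: B == [set: 'I_n] ->
  (u \in \bigcup_(i in A) S i)%:R = 1 - (A :&: B == set0)%:R :> R.
  move=> A _.
  have -> : (u \in \bigcup_(i in A) S i) = (A :&: B != set0).
    apply/idP/idP.
      case/bigcupP => i hi ui; apply/set0Pn.
      exists i; rewrite inE hi /=.
      by move: (hall2 i); rewrite ui andbT inE negbK.
    case/set0Pn => i; rewrite inE => /andP [hiA hiB]; apply/bigcupP; exists i => //.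
    by move: (hall i); rewrite hiB /= negbK.
  by case: (A :&: B == set0); rewrite /= ?subr0 ?subrr.
rewrite (eq_bigr _ (fun A hA => congr1 _ (key A hA))).
under eq_bigr do rewrite mulrBr.
rewrite sumrB (@toggle0 R n B x (fun _ => (1 : R)) xB) // sub0r; congr (- _).
transitivity (\sum_(A | (A :|: B == [set: 'I_n]) && (A :&: B == set0)) (-1) ^+ #|A :&: B| : R).
  rewrite big_mkcondr; apply: eq_bigr => A _; by case: eqP; rewrite ?mulr1 ?mulr0.
rewrite (big_pred1 (~: B)); first by rewrite setIC setICr cards0 expr0.
move=> A /=; apply/andP/eqP => [[/eqP h1 /eqP h2] | ->].
  apply/setP => i; move/setP: h1 => /(_ i); move/setP: h2 => /(_ i); rewrite !inE.
  by case: (i \in A); case: (i \in B).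
by rewrite setUC setUCr setIC setICr !eqxx.
Qed.

Theorem theorem3 (R : realFieldType) (U : finType) (n : nat)
  (S : 'I_n -> {set U}) (w : U -> R) (c : R) (B : {set 'I_n}) :
  fourier4 (sfun S w c) B =
    (if B != set0 then
       - wsum w ((\bigcap_(i in B) S i) :\: (\bigcup_(i in ~: B) S i))
     else sfun S w c [set: 'I_n]).
Proof. exact: main. Qed.
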